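(* For any quantum seed $(X,\mathbf h,\Lambda,\widetilde B)$, $$\mathcal U(X,\mathbf h,\Lambda,\widetilde B)=\bigcap_{i=1}^n\mathbb{ZP}[X_1^{\pm1},\dots,X_{i-1}^{\pm1},X_i,X'_i,X_{i+1}^{\pm1},\dots,X_n^{\pm1}],$$ where $X'_i$ is the $i$-th cluster variable of $\mu_i(X,\mathbf h,\Lambda,\widetilde B)$.
   Context: Notation: $[a,b]=\{a,a+1,\dots,b\}$; $[x]_+=\max(x,0)$, applied entrywise to vectors; $e_1,\dots,e_m$ is the standard basis of $\mathbb Z^m$. Fix integers $m\ge n\ge 1$. A compatible pair $(\Lambda,\widetilde B)$ consists of an $m\times n$ integer matrix $\widetilde B=(b_{kl})$ and a skew-symmetric $m\times m$ integer matrix $\Lambda$ such that $\Lambda\widetilde B=-\begin{bmatrix}D\\0\end{bmatrix}$ for some $D=\mathrm{diag}(\tilde d_1,\dots,\tilde d_n)$ with all $\tilde d_k\in\mathbb Z_{>0}$. Write $\Lambda(a,b)=a^T\Lambda b$. Fix positive integers $d_1,\dots,d_n$ such that $d_k$ divides every entry of the $k$-th column $b^k$ of $\widetilde B$ (preserved under mutation); $\beta^k=\frac1{d_k}b^k$. The quantum torus $\mathcal T(\Lambda)$ is the $\mathbb Z[q^{\pm1/2}]$-algebra with basis $\{X(c)\mid c\in\mathbb Z^m\}$ and multiplication $X(c)X(d)=q^{\frac12\Lambda(c,d)}X(c+d)$; $\mathcal F$ is its skew field of fractions, $X_k=X(e_k)$. For $k\in[1,n]$, $\mathbf h_k=(h_{k,0},\dots,h_{k,d_k})$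 with $h_{k,r}\in\mathbb Z[q^{\pm1/2}]$, $h_{k,r}=h_{k,d_k-r}$, $h_{k,0}=h_{k,d_k}=1$. A quantum seed $(X,\mathbf h,\Lambda,\widetilde B)$ consists of a compatible pair, $\mathbf h$, and a map $X:\mathbb Z^m\to\mathcal F$ with $X(c)X(d)=q^{\frac12\Lambda(c,d)}X(c+d)$. Mutation in direction $i$: $\mu_i(X,\mathbf h,\Lambda,\widetilde B)=(X',\mathbf h,E^T\Lambda E,E\widetilde BF)$ where $E_{kl}=\delta_{kl}$ ($l\neq i$), $E_{ii}=-1$, $E_{ki}=[-\varepsilon b_{ki}]_+$ ($k\ne i$), $F_{kl}=\delta_{kl}$ ($k\ne i$), $F_{ii}=-1$, $F_{il}=[\varepsilon b_{il}]_+$ ($l\ne i$), $\varepsilon\in\{\pm1\}$ arbitrary, and $X'$ is determined by $X'(e_k)=X(e_k)$ ($k\ne i$) and $X'(e_i)=\sum_{r=0}^{d_i}h_{i,r}X(r[\beta^i]_++(d_i-r)[-\beta^i]_+-e_i)$; write $X'_k=X'(e_k)$. $\mathbb{ZP}$ is the ring of Laurent polynomials in $X_{n+1},\dots,X_m$ with coefficients in $\mathbb Z[q^{\pm1/2}]$; for $Y_1,\dots,Y_s\in\mathcal F$, $\mathbb{ZP}[Y_1,\dots,Y_s]$ is the subring of $\mathcal F$ generated by $\mathbb{ZP}$ and the $Y_k$ (exponent $\pm1$ means both $Y$ and $Y^{-1}$ are adjoined). For a seed $\Sigma=(X,\mathbf h,\Lambda,\widetilde B)$ let $\mathbb L(\Sigma)=\mathbb{ZP}[X_1^{\pm1},\dots,X_n^{\pm1}]$;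 the upper bound is $\mathcal U(\Sigma)=\mathbb L(\Sigma)\cap\bigcap_{i=1}^n\mathbb L(\mu_i(\Sigma))$. *)

(* Defs.v *)
From HB Require Import structures.
From mathcomp Require Import all_boot all_order all_algebra.
Set Implicit Arguments. Unset Strict Implicit. Unset Printing Implicit Defensive.
Import Order.TTheory GRing.Theory Num.Theory.
Local Open Scope ring_scope.

(* Indices: [1,m] is 'I_m (0-based); the mutable indices [1,n] are the
   i : 'I_m with val i < n, and 'I_n is embedded via widen_ord. *)

Inductive subring_gen (R : unitRingType) (S : R -> Prop) : R -> Prop :=
| sg_base x : S x -> subring_gen S x
| sg_one : subring_gen S 1
| sg_opp x : subring_gen S x -> subring_gen S (- x)
| sg_add x y : subring_gen S x -> subring_gen S y -> subring_gen S (x + y)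
| sg_mul x y : subring_gen S x -> subring_gen S y -> subring_gen S (x * y).

Definition lam (m : nat) (L : 'M[int]_m) (a b : 'rV[int]_m) : int :=
  (a *m L *m b^T) 0 0.

Definition evec (m : nat) (k : 'I_m) : 'rV[int]_m := delta_mx 0 k.

Definition compatible_pair (m n : nat) (L : 'M[int]_m) (B : 'M[int]_(m, n)) :=
  L^T = - L /\
  exists dt : 'I_n -> int, (forall k, 0 < dt k) /\
    forall (k : 'I_m) (l : 'I_n),
      (L *m B) k l = - (if nat_of_ord k == nat_of_ord l then dt l else 0).

Definition valid_d (m n : nat) (B : 'M[int]_(m, n)) (d : 'I_n -> nat) :=
  forall k : 'I_n, (0 < d k)%N /\ forall j : 'I_m, ((d k)%:Z %| B j k)%Z.

(* The image of Z[q^{+-1/2}] in D, where v plays the role of q^{1/2}. *)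
Definition Zq (D : unitRingType) (v : D) : D -> Prop :=
  subring_gen (fun x => x = v \/ x = v^-1).

Definition valid_h (D : unitRingType) (v : D) (n : nat) (d : 'I_n -> nat)
    (h : 'I_n -> nat -> D) :=
  forall k : 'I_n,
    (forall r, (r <= d k)%N -> Zq v (h k r)) /\
    h k 0%N = 1 /\ h k (d k) = 1 /\
    (forall r, (r <= d k)%N -> h k r = h k (d k - r)%N).

(* X : Z^m -> D is a toric frame for Lambda: the quasi-commutation rule holds
   and the family (q^{k/2} X(c))_{k in Z, c in Z^m} is Z-linearly independent,
   i.e. X extends to an embedding of the quantum torus T(Lambda) into D
   (hence of its skew field of fractions F into D). *)
Definition toric_frame (D : unitRingType) (v : D) (m : nat) (L : 'M[int]_m)
    (X : 'rV[int]_m -> D) :=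
  (forall c d, X c * X d = v ^ (lam L c d) * X (c + d)) /\
  (forall (s : seq (int * 'rV[int]_m)) (a : int * 'rV[int]_m -> int),
      uniq s ->
      \sum_(p <- s) (a p)%:~R * v ^ p.1 * X p.2 = 0 ->
      forall p, p \in s -> a p = 0).

Definition division_ring_with_q (D : unitRingType) (v : D) :=
  (forall x : D, x != 0 -> x \is a GRing.unit) /\
  v \is a GRing.unit /\ (forall x : D, v * x = x * v).

Definition pos_part (x : int) : int := Num.max x 0.

Definition mut_exp (m n : nat) (Hnm : (n <= m)%N) (B : 'M[int]_(m, n))
    (d : 'I_n -> nat) (i : 'I_n) (r : nat) : 'rV[int]_m :=
  \row_k ((r%:Z) * pos_part (divz (B k i) (d i)%:Z)
          + ((d i - r)%N%:Z) * pos_part (- divz (B k i) (d i)%:Z))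
  - evec (widen_ord Hnm i).

Definition mut_var (D : unitRingType) (m n : nat) (Hnm : (n <= m)%N)
    (X : 'rV[int]_m -> D) (h : 'I_n -> nat -> D) (B : 'M[int]_(m, n))
    (d : 'I_n -> nat) (i : 'I_n) : D :=
  \sum_(r < (d i).+1) h i r * X (mut_exp Hnm B d i r).

(* generators of ZP: q^{+-1/2} and X_j^{+-1}, j in [n+1,m] *)
Definition ZP_gens (D : unitRingType) (v : D) (m n : nat)
    (X : 'rV[int]_m -> D) (x : D) : Prop :=
  x = v \/ x = v^-1 \/
  exists j : 'I_m, (n <= j)%N /\ (x = X (evec j) \/ x = (X (evec j))^-1).

Definition ZP_adjoin (D : unitRingType) (v : D) (m n : nat)
    (X : 'rV[int]_m -> D) (Y : D -> Prop) : D -> Prop :=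
  subring_gen (fun x => ZP_gens v n X x \/ Y x).

Definition Lring (D : unitRingType) (v : D) (m n : nat) (Hnm : (n <= m)%N)
    (X : 'rV[int]_m -> D) : D -> Prop :=
  ZP_adjoin v n X (fun y => exists k : 'I_n,
     y = X (evec (widen_ord Hnm k)) \/ y = (X (evec (widen_ord Hnm k)))^-1).

(* L(mu_i Sigma) = ZP[X'_1^{+-1},...,X'_n^{+-1}], X'_k = X_k for k <> i *)
Definition Lring_mut (D : unitRingType) (v : D) (m n : nat) (Hnm : (n <= m)%N)
    (X : 'rV[int]_m -> D) (h : 'I_n -> nat -> D) (B : 'M[int]_(m, n))
    (d : 'I_n -> nat) (i : 'I_n) : D -> Prop :=
  ZP_adjoin v n X (fun y =>
     (exists k : 'I_n, k != i /\
        (y = X (evec (widen_ord Hnm k)) \/ y = (X (evec (widen_ord Hnm k)))^-1))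
     \/ y = mut_var Hnm X h B d i \/ y = (mut_var Hnm X h B d i)^-1).

Definition upper_bound (D : unitRingType) (v : D) (m n : nat) (Hnm : (n <= m)%N)
    (X : 'rV[int]_m -> D) (h : 'I_n -> nat -> D) (B : 'M[int]_(m, n))
    (d : 'I_n -> nat) (x : D) : Prop :=
  Lring v Hnm X x /\ forall i : 'I_n, Lring_mut v Hnm X h B d i x.

Definition Lring_i (D : unitRingType) (v : D) (m n : nat) (Hnm : (n <= m)%N)
    (X : 'rV[int]_m -> D) (h : 'I_n -> nat -> D) (B : 'M[int]_(m, n))
    (d : 'I_n -> nat) (i : 'I_n) : D -> Prop :=
  ZP_adjoin v n X (fun y =>
     (exists k : 'I_n, k != i /\
        (y = X (evec (widen_ord Hnm k)) \/ y = (X (evec (widen_ord Hnm k)))^-1))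
     \/ y = X (evec (widen_ord Hnm i)) \/ y = mut_var Hnm X h B d i).

(* Main.v *)
Require Import Defs.
From HB Require Import structures.
From mathcomp Require Import all_boot all_order all_algebra.
From mathcomp Require Import ring zify.
Import Order.TTheory GRing.Theory Num.Theory.
Local Open Scope ring_scope.
Set Implicit Arguments. Unset Strict Implicit.


Section SG.
Variable R : unitRingType.
Implicit Types S T : R -> Prop.

Lemma sg_mono S T : (forall x, S x -> subring_gen T x) ->
  forall x, subring_gen S x -> subring_gen T x.
Proof.
move=> H x; elim=> {x}.
- exact: H.
- exact: sg_one.
- by move=> x _; apply: sg_opp.
- by move=> x y _ Hx _ Hy; apply: sg_add.
- by move=> x y _ Hx _ Hy; apply: sg_mul.
Qed.

Lemma sg0 S : subring_gen S 0.
Proof. by rewrite -(subrr (1 : R)); apply: sg_add; [apply: sg_one| apply/sg_opp/sg_one]. Qed.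

Lemma sg_sub S x y : subring_gen S x -> subring_gen S y -> subring_gen S (x - y).
Proof. by move=> Hx Hy; apply: sg_add => //; apply: sg_opp. Qed.

Lemma sg_sum S (I : Type) (r : seq I) (P : pred I) (F : I -> R) :
  (forall i, P i -> subring_gen S (F i)) -> subring_gen S (\sum_(i <- r | P i) F i).
Proof.
move=> H; apply: (big_ind (subring_gen S)); first exact: sg0.
- by move=> x y; apply: sg_add.
- exact: H.
Qed.

Lemma sg_exp S x k : subring_gen S x -> subring_gen S (x ^+ k).
Proof. by move=> Hx; elim: k => [|k IH]; [rewrite expr0; apply: sg_one| rewrite exprS; apply: sg_mul]. Qed.

Lemma sg_expz S x (z : int) : subring_gen S x -> subring_gen S x^-1 -> subring_gen S (x ^ z).
Proof.
move=> Hx Hx'; case: z => k; first exact: sg_exp.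
change (subring_gen S (x ^+ k.+1)^-1).
by rewrite -exprVn; apply: sg_exp.
Qed.

Lemma sg_base' S x : S x -> subring_gen S x.
Proof. exact: sg_base. Qed.
End SG.

Section Div.
Variable D : unitRingType.
Hypothesis Hdiv : forall x : D, x != 0 -> x \is a GRing.unit.

Lemma div_mul_eq0 (x y : D) : x * y = 0 -> x = 0 \/ y = 0.
Proof.
move=> H; case: (eqVneq x 0) => [->|nx]; first by left.
by right; rewrite -(mulKr (Hdiv nx) y) H mulr0.
Qed.

Lemma eig_uniq (I : eqType) (W : D) (mu : I -> D) (s : seq I) (F : I -> D) :
  W \is a GRing.unit -> (forall k x, mu k * x = x * mu k) ->
  (forall k l, k != l -> mu k != mu l) -> uniq s ->
  (forall k, k \in s -> W * F k = mu k * F k * W) ->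
  \sum_(k <- s) F k = 0 -> forall k, k \in s -> F k = 0.
Proof.
move=> uW cmu imu; elim: s F => [|k0 s IH] F //= /andP[nk0 us] HF Hs.
have HW : \sum_(k <- k0 :: s) mu k * F k = 0.
  transitivity (W * (\sum_(k <- k0 :: s) F k) * W^-1); last by rewrite Hs mulr0 mul0r.
  rewrite mulr_sumr mulr_suml; apply: eq_big_seq => k Hk.
  by rewrite HF // mulrK.
pose G k := (mu k - mu k0) * F k.
have HG : \sum_(k <- s) G k = 0.
  transitivity (\sum_(k <- k0 :: s) mu k * F k - mu k0 * \sum_(k <- k0 :: s) F k);
    last by rewrite HW Hs mulr0 subrr.
  rewrite mulr_sumr -sumrB big_cons subrr add0r.
  by apply: eq_bigr => k _; rewrite /G mulrBl.
have HG0 : forall k, k \in s -> G k = 0.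
  apply: IH => // k Hk.
  have cc : forall x, (mu k - mu k0) * x = x * (mu k - mu k0).
    by move=> x; rewrite mulrBl mulrBr !cmu.
  rewrite /G mulrA -cc -mulrA HF ?inE ?Hk ?orbT // !mulrA.
  by congr (_ * _ * _); rewrite cc.
have HF0 : forall k, k \in s -> F k = 0.
  move=> k Hk; have := HG0 k Hk; rewrite /G => /div_mul_eq0 [|//].
  move/eqP; rewrite subr_eq0 => /eqP E; exfalso.
  have : k != k0 by apply: contraNneq nk0 => <-.
  by move/imu; rewrite E eqxx.
move=> k; rewrite inE => /orP [/eqP ->|]; last exact: HF0.
move: Hs; rewrite big_cons big_seq big1 ?addr0 //.
Qed.

Lemma group_sum (I : eqType) (T : eqType) (t : seq T) (deg : T -> I) (f : T -> D) :
  \sum_(p <- t) f p = \sum_(k <- undup (map deg t)) \sum_(p <- t | deg p == k) f p.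
Proof.
under [RHS]eq_bigr do rewrite big_mkcond.
rewrite exchange_big /=; apply: eq_big_seq => p Hp.
rewrite -(big_mkcond (fun k => deg p == k) (fun _ => f p)) big_const_seq.
have -> : count (fun k => deg p == k) (undup [seq deg i | i <- t]) = 1%N.
  rewrite (eq_count (a2 := pred1 (deg p))); last by move=> k /=; rewrite eq_sym.
  by rewrite count_uniq_mem ?undup_uniq // mem_undup map_f.
by rewrite /= addr0.
Qed.

Lemma hom_zero (T : eqType) (W : D) (mu : int -> D) (t : seq T) (deg : T -> int)
  (f : T -> D) :
  W \is a GRing.unit -> (forall k x, mu k * x = x * mu k) ->
  (forall k l, k != l -> mu k != mu l) ->
  (forall p, p \in t -> W * f p = mu (deg p) * f p * W) ->
  \sum_(p <- t) f p = 0 -> forall P : pred int, \sum_(p <- t | P (deg p)) f p = 0.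
Proof.
move=> uW cmu imu HF H0 P.
have Hk : forall k, k \in undup (map deg t) -> \sum_(p <- t | deg p == k) f p = 0.
  apply: (eig_uniq (F := fun k => \sum_(p <- t | deg p == k) f p) uW cmu imu).
  - exact: undup_uniq.
  - move=> k _; rewrite mulr_sumr [mu k * _]mulr_sumr mulr_suml.
    rewrite -big_filter -[RHS]big_filter; apply: eq_big_seq => p.
    by rewrite mem_filter => /andP[/eqP <- Hp]; rewrite HF.
  - by rewrite -group_sum.
rewrite big_mkcond (group_sum _ deg) big_seq big1 // => k Hk'.
case: (boolP (P k)) => Pk.
  transitivity (\sum_(p <- t | deg p == k) f p); last exact: Hk.
  by apply: eq_bigr => p /eqP ->; rewrite Pk.
by apply: big1 => p /eqP ->; rewrite (negbTE Pk).
Qed.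
End Div.


Section Lam.
Variables (m : nat) (L : 'M[int]_m).
Hypothesis HL : L^T = - L.

Lemma lam_skew a b : lam L a b = - lam L b a.
Proof.
rewrite /lam.
have -> : a *m L *m b^T = (b *m L^T *m a^T)^T.
  by rewrite !trmx_mul !trmxK mulmxA.
rewrite HL.
by rewrite mulmxN mulNmx !mxE.
Qed.

Lemma lamDr a b c : lam L a (b + c) = lam L a b + lam L a c.
Proof. by rewrite /lam linearD /= mulmxDr mxE. Qed.

Lemma lamZr a (k : int) b : lam L a (k *: b) = k * lam L a b.
Proof. by rewrite /lam linearZ /= -scalemxAr mxE. Qed.

Lemma lamNr a b : lam L a (- b) = - lam L a b.
Proof. by rewrite -scaleN1r lamZr mulN1r. Qed.

Lemma lamBr a b c : lam L a (b - c) = lam L a b - lam L a c.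
Proof. by rewrite lamDr lamNr. Qed.

Lemma lamDl a b c : lam L (b + c) a = lam L b a + lam L c a.
Proof. by rewrite lam_skew lamDr opprD -!lam_skew. Qed.

Lemma lamZl a (k : int) b : lam L (k *: b) a = k * lam L b a.
Proof. by rewrite lam_skew lamZr -mulrN -lam_skew. Qed.

Lemma lamNl a b : lam L (- b) a = - lam L b a.
Proof. by rewrite lam_skew lamNr opprK -lam_skew. Qed.

Lemma lam0r a : lam L a 0 = 0.
Proof. by rewrite -(scale0r (0 : 'rV[int]_m)) lamZr mul0r. Qed.

Lemma lam0l a : lam L 0 a = 0.
Proof. by rewrite lam_skew lam0r oppr0. Qed.

Lemma lam_aa a : lam L a a = 0.
Proof.
have H := lam_skew a a.
have : lam L a a + lam L a a = 0 by rewrite {1}H addNr.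
by rewrite -mulr2n => /eqP; rewrite mulrn_eq0 /= => /eqP.
Qed.
End Lam.


Section Toric.
Variables (D : unitRingType) (v : D) (m : nat) (L : 'M[int]_m) (X : 'rV[int]_m -> D).
Hypothesis Hdiv : forall x : D, x != 0 -> x \is a GRing.unit.
Hypothesis Hv : v \is a GRing.unit.
Hypothesis Hvc : forall x : D, v * x = x * v.
Hypothesis HL : L^T = - L.
Hypothesis HXm : forall c d, X c * X d = v ^ (lam L c d) * X (c + d).
Hypothesis Hind : forall (s : seq (int * 'rV[int]_m)) (a : int * 'rV[int]_m -> int),
      uniq s ->
      \sum_(p <- s) (a p)%:~R * v ^ p.1 * X p.2 = 0 ->
      forall p, p \in s -> a p = 0.

Lemma vz_unit (z : int) : v ^ z \is a GRing.unit.
Proof. exact: unitrXz. Qed.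

Lemma vzD (a b : int) : v ^ (a + b) = v ^ a * v ^ b.
Proof. exact: exprzDr. Qed.

Lemma vz_c (z : int) x : v ^ z * x = x * v ^ z.
Proof. have := @commrXz _ x v z; rewrite /GRing.comm => ->//. Qed.

Lemma vzV (z : int) : v ^ (- z) * v ^ z = 1.
Proof. by rewrite -vzD addNr expr0z. Qed.

Lemma X0_neq0 : X 0 != 0.
Proof.
apply/eqP => E.
have := Hind (s := [:: (0, 0)]) (a := fun _ => 1) erefl.
rewrite big_seq1 /= E mulr0 => /(_ erefl (0, 0)).
by rewrite mem_seq1 eqxx => /(_ erefl).
Qed.

Lemma X0 : X 0 = 1.
Proof.
have := HXm 0 0; rewrite addr0 /lam mul0mx mul0mx mxE expr0z mul1r.
move=> E; apply: (mulrI (Hdiv X0_neq0)); by rewrite E mulr1.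
Qed.

Lemma v_neq1 (z : int) : z != 0 -> v ^ z != 1.
Proof.
move=> nz; apply/eqP => E.
have := Hind (s := [:: (z, 0); (0, 0)]) (a := fun p => if p.1 == 0 then -1 else 1).
rewrite /= inE /= xpair_eqE (negbTE nz) /= => /(_ erefl).
rewrite big_cons big_seq1 /= (negbTE nz) E expr0z X0 => H.
have := H _ (z, 0) (mem_head _ _); rewrite /= (negbTE nz) => H1.
suff : (1 : int) = 0 by [].
by apply: H1; rewrite !mulr1 mulrN1z subrr.
Qed.

Lemma vz_inj (a b : int) : a != b -> v ^ a != v ^ b.
Proof.
move=> nab; apply: contra (v_neq1 (z := a - b) _) => [/eqP E|]; last by rewrite subr_eq0.
by rewrite vzD E -vzD addrN.
Qed.

Lemma X_neg c : X c * X (- c) = 1.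
Proof. by rewrite HXm addrN X0 mulr1 lamNr // lam_aa // oppr0 expr0z. Qed.

Lemma X_neg' c : X (- c) * X c = 1.
Proof. by have := X_neg (- c); rewrite opprK. Qed.

Lemma X_unit c : X c \is a GRing.unit.
Proof. apply/unitrP; exists (X (- c)); by rewrite X_neg X_neg'. Qed.

Lemma X_inv c : (X c)^-1 = X (- c).
Proof. by rewrite -[RHS]mul1r -(mulVr (X_unit c)) -mulrA X_neg mulr1. Qed.

Lemma X_add a b : X (a + b) = v ^ (- lam L a b) * (X a * X b).
Proof. by rewrite HXm mulrA vzV mul1r. Qed.

Lemma X_comm a b : X a * X b = v ^ (lam L a b + lam L a b) * (X b * X a).
Proof.
rewrite HXm [X b * _]HXm (addrC b a) mulrA -vzD (lam_skew HL b a).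
by rewrite addrK.
Qed.

Lemma X_scale (k : int) e : X (k *: e) = X e ^ k.
Proof.
have Hn : forall k : nat, X (k%:Z *: e) = X e ^+ k.
  elim=> [|j IH]; first by rewrite scale0r X0 expr0.
  have -> : (j.+1)%:Z *: e = j%:Z *: e + e.
    by rewrite -[j.+1]addn1 PoszD scalerDl scale1r.
  rewrite X_add IH exprSr.
  by rewrite (lamZl HL) (lam_aa HL) mulr0 oppr0 expr0z mul1r.
case: k => k; first exact: Hn.
rewrite NegzE scaleNr -X_inv Hn.
by [].
Qed.

Lemma row_sum_delta (c : 'rV[int]_m) : c = \sum_(j < m) c 0 j *: evec j.
Proof. by rewrite {1}(matrix_sum_delta c) big_ord1. Qed.

Lemma X_gen (S : D -> Prop) (c : 'rV[int]_m) :
  S v -> S v^-1 -> (forall j, subring_gen S (X (c 0 j *: evec j))) ->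
  subring_gen S (X c).
Proof.
move=> Sv Sv' Hj; rewrite (row_sum_delta c).
elim: (index_enum _) => [|j r IH]; first by rewrite big_nil X0; apply: sg_one.
rewrite big_cons X_add; apply: sg_mul; first by apply: sg_expz; apply: sg_base.
exact: sg_mul.
Qed.

Lemma X_e_gen (S : D -> Prop) (k : int) e :
  subring_gen S (X e) -> subring_gen S (X e)^-1 -> subring_gen S (X (k *: e)).
Proof. by move=> H1 H2; rewrite X_scale; apply: sg_expz. Qed.

Lemma X_e_gen_pos (S : D -> Prop) (k : int) e :
  0 <= k -> subring_gen S (X e) -> subring_gen S (X (k *: e)).
Proof. by case: k => // k _ H; rewrite X_scale; apply: sg_exp. Qed.

Lemma vz_gen (S : D -> Prop) (z : int) : S v -> S v^-1 -> subring_gen S (v ^ z).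
Proof. by move=> H1 H2; apply: sg_expz; apply: sg_base. Qed.

Section QC.
Variables (G y U : D).
Hypothesis HU : U \is a GRing.unit.
Hypothesis HUc : forall x, U * x = x * U.

Lemma Uinv_c x : U^-1 * x = x * U^-1.
Proof. by apply/esym/commrV; rewrite /GRing.comm HUc. Qed.

Lemma UX_c k x : U ^+ k * x = x * U ^+ k.
Proof. by elim: k => [|k IH]; rewrite ?expr0 ?mul1r ?mulr1 // exprS -mulrA IH mulrA HUc mulrA. Qed.

Lemma qcl_nat k : G * y = U * y * G -> G ^+ k * y = U ^+ k * y * G ^+ k.
Proof.
move=> H; elim: k => [|k IH]; first by rewrite !expr0 !mul1r !mulr1.
rewrite [G ^+ k.+1]exprS -mulrA IH !mulrA -(UX_c k G) -(mulrA (U ^+ k) G y) H.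
by rewrite [U ^+ k.+1]exprSr !mulrA.
Qed.

Lemma qcr_nat k : G * y = U * y * G -> G * y ^+ k = U ^+ k * y ^+ k * G.
Proof.
move=> H; elim: k => [|k IH]; first by rewrite !expr0 !mul1r !mulr1.
rewrite [y ^+ k.+1]exprSr mulrA IH -!mulrA H !mulrA.
by rewrite [U ^+ k.+1]exprSr -(mulrA (U ^+ k) (y ^+ k) U) -(HUc (y ^+ k)) !mulrA.
Qed.

Lemma qc_invl : G \is a GRing.unit -> G * y = U * y * G -> G^-1 * y = U^-1 * y * G^-1.
Proof.
move=> uG H.
have : G^-1 * (G * y) * G^-1 = G^-1 * (U * y * G) * G^-1 by rewrite H.
rewrite mulKr // -!mulrA mulrV // mulr1 => ->.
by rewrite (mulrA G^-1) -(HUc G^-1) !mulrA mulVr // mul1r.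
Qed.

Lemma qc_invr : y \is a GRing.unit -> G * y = U * y * G -> G * y^-1 = U^-1 * y^-1 * G.
Proof.
move=> uy H.
have E : y^-1 * G = U * G * y^-1.
  rewrite -[y^-1 * G](mulrK uy) -(mulrA y^-1 G y) H.
  by rewrite (HUc y) -(mulrA y U G) (mulKr uy).
by rewrite -mulrA E !mulrA mulVr // mul1r.
Qed.
End QC.

Lemma qcl_pow (G y U : D) (b : int) : U \is a GRing.unit -> (forall x, U * x = x * U) ->
  G \is a GRing.unit -> G * y = U * y * G -> G ^ b * y = U ^ b * y * G ^ b.
Proof.
move=> HU HUc uG H; case: b => k; first exact: qcl_nat.
change ((G ^+ k.+1)^-1 * y = (U ^+ k.+1)^-1 * y * (G ^+ k.+1)^-1).
rewrite -!exprVn; apply: qcl_nat; first exact: Uinv_c.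
exact: qc_invl.
Qed.

Lemma qcr_pow (G y U : D) (b : int) : U \is a GRing.unit -> (forall x, U * x = x * U) ->
  y \is a GRing.unit -> G * y = U * y * G -> G * y ^ b = U ^ b * y ^ b * G.
Proof.
move=> HU HUc uy H; case: b => k; first exact: qcr_nat.
change (G * (y ^+ k.+1)^-1 = (U ^+ k.+1)^-1 * (y ^+ k.+1)^-1 * G).
rewrite -!exprVn; apply: qcr_nat; first exact: Uinv_c.
exact: qc_invr.
Qed.

Section Mut.
Variables (n : nat) (Hnm : (n <= m)%N)
  (B : 'M[int]_(m, n)) (d : 'I_n -> nat)
  (h : 'I_n -> nat -> D) (dt : 'I_n -> int) (i : 'I_n).
Hypothesis Hdt : forall k, 0 < dt k.
Hypothesis HLB : forall (k : 'I_m) (l : 'I_n),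
      (L *m B) k l = - (if nat_of_ord k == nat_of_ord l then dt l else 0).
Hypothesis Hd : valid_d B d.
Hypothesis Hh : valid_h v d h.

Let ii := widen_ord Hnm i.
Definition bcol : 'rV[int]_m := \row_k B k i.
Definition beta : 'rV[int]_m := \row_k divz (B k i) (d i)%:Z.
Let e := evec ii.
Let mexp r := mut_exp Hnm B d i r.

Lemma lam_bcol (c : 'rV[int]_m) : lam L c bcol = - (dt i * c 0 ii).
Proof.
rewrite /lam -mulmxA mxE.
have E : forall k, (L *m bcol^T) k 0 = (L *m B) k i.
  by move=> k; rewrite !mxE; apply: eq_bigr => j _; rewrite !mxE.
under eq_bigr do rewrite E HLB.
rewrite (bigD1 ii) //= eqxx big1 ?addr0; first by rewrite mulrN mulrC.
by move=> k nk; rewrite ifN ?mulr0 ?oppr0 //; apply: contra nk => /eqP H; apply/eqP/val_inj.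
Qed.

Lemma bcol_beta : bcol = (d i)%:Z *: beta.
Proof.
apply/matrixP => a b; rewrite !mxE mulrC divzK //.
by case: (Hd i) => _ /(_ b).
Qed.

Lemma d_pos : (d i)%:Z != 0.
Proof. by case: (Hd i) => H _; rewrite eqz_nat -lt0n. Qed.

Lemma lam_beta (c : 'rV[int]_m) : c 0 ii = 0 -> lam L c beta = 0.
Proof.
move=> Hc; have := lam_bcol c; rewrite Hc mulr0 oppr0 bcol_beta lamZr //.
by move/eqP; rewrite mulf_eq0 (negbTE d_pos) /= => /eqP.
Qed.

Lemma bcol_ii : bcol 0 ii = 0.
Proof.
have := lam_bcol bcol; rewrite (lam_aa HL) => /eqP; rewrite eq_sym oppr_eq0 mulf_eq0.
by rewrite gt_eqF ?Hdt //= => /eqP.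
Qed.

Lemma beta_ii : beta 0 ii = 0.
Proof. by have := bcol_ii; rewrite !mxE => ->; rewrite div0z. Qed.

Lemma e_ii : e 0 ii = 1.
Proof. by rewrite /e /evec mxE !eqxx. Qed.

Lemma lam_e_beta : lam L e beta != 0.
Proof.
have := lam_bcol e; rewrite e_ii mulr1 bcol_beta lamZr //.
move=> E; apply/eqP => E'; move: E; rewrite E' mulr0 => /eqP.
by rewrite eq_sym oppr_eq0 gt_eqF ?Hdt.
Qed.

Lemma mexp_eq (r : nat) : (r <= d i)%N -> mexp r = mexp 0 + r%:Z *: beta.
Proof.
move=> Hr; apply/matrixP => a b; rewrite !mxE subn0 -(subzn Hr).
set p := pos_part _; set q := pos_part _.
have -> : divz (B b i) (d i)%:Z = p - q by rewrite /p /q /pos_part; lia.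
ring.
Qed.

Lemma mexp_ii (r : nat) : mexp r 0 ii = -1.
Proof.
have := beta_ii; rewrite !mxE => ->; rewrite /pos_part oppr0 /Num.max ltxx /=.
by rewrite !mulr0 add0r eqxx.
Qed.

Lemma lam_mexp_c (c : 'rV[int]_m) (r : nat) : c 0 ii = 0 -> (r <= d i)%N ->
  lam L c (mexp r) = lam L c (mexp 0).
Proof. by move=> Hc Hr; rewrite mexp_eq // lamDr lamZr lam_beta // mulr0 addr0. Qed.

Lemma lam_mexp_e (r : nat) : (r <= d i)%N ->
  lam L e (mexp r) = lam L e (mexp 0) + r%:Z * lam L e beta.
Proof. by move=> Hr; rewrite mexp_eq // lamDr lamZr. Qed.

Lemma Zq_c x : Zq v x -> forall y, x * y = y * x.
Proof.
elim=> {x}.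
- move=> x [->|->] y; first exact: Hvc.
  have := @commrV _ y v; rewrite /GRing.comm => -> //; exact/esym/Hvc.
- by move=> y; rewrite mul1r mulr1.
- by move=> x _ IH y; rewrite mulNr IH mulrN.
- by move=> x z _ IH1 _ IH2 y; rewrite mulrDl mulrDr IH1 IH2.
- by move=> x z _ IH1 _ IH2 y; rewrite -mulrA IH2 mulrA IH1 mulrA.
Qed.

Lemma h_c (r : nat) y : (r <= d i)%N -> h i r * y = y * h i r.
Proof. by move=> Hr; apply: Zq_c; case: (Hh i) => H _; apply: H. Qed.

Definition Zv := mut_var Hnm X h B d i.

Lemma Zv_eq : Zv = \sum_(r < (d i).+1) h i r * X (mexp r).
Proof. by []. Qed.

Lemma Z_qcomm (c : 'rV[int]_m) : c 0 ii = 0 ->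
  Zv * X c = v ^ (lam L (mexp 0) c + lam L (mexp 0) c) * X c * Zv.
Proof.
move=> Hc; rewrite Zv_eq mulr_suml mulr_sumr; apply: eq_bigr => r _.
have Hr : (r <= d i)%N by rewrite -ltnS.
rewrite -mulrA X_comm (lam_skew HL) (lam_mexp_c Hc Hr) -(lam_skew HL).
rewrite !mulrA; congr (_ * _); rewrite h_c // -!mulrA h_c //.
Qed.

Lemma mu_inj (k l : int) : k != l -> v ^ (k + k) != v ^ (l + l).
Proof. by move=> nkl; apply: vz_inj; apply/eqP => H; move/eqP: nkl; apply; lia. Qed.

Lemma Zv_neq0 : Zv != 0.
Proof.
apply/eqP => E0.
have Heig : forall r, r \in index_enum 'I_(d i).+1 ->
   X e * (h i r * X (mexp r)) =
   v ^ (lam L e (mexp r) + lam L e (mexp r)) * (h i r * X (mexp r)) * X e.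
  move=> r _; rewrite mulrA -(@h_c r (X e) (ltn_ord r)) -mulrA X_comm.
  by rewrite !mulrA [h i r * _](h_c _ (ltn_ord r)).
have := @hom_zero D Hdiv _ (X e) (fun k => v ^ (k + k)) (index_enum _)
  (fun r : 'I_(d i).+1 => lam L e (mexp r)) (fun r => h i r * X (mexp r))
  (X_unit e) (fun k x => vz_c _ x) mu_inj Heig E0 (fun k => k == lam L e (mexp 0)).
have Hp : (fun p : 'I_(d i).+1 => lam L e (mexp p) == lam L e (mexp 0)) =1 pred1 ord0.
  move=> r /=; rewrite (lam_mexp_e (ltn_ord r)).
  rewrite -subr_eq0 addrAC subrr add0r mulf_eq0 (negbTE lam_e_beta) orbF.
  by rewrite eqz_nat.
rewrite (big_pred1 _ Hp) /=; case: (Hh i) => _ [-> _]; rewrite mul1r => E1.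
by have := X_unit (mexp 0); rewrite E1 unitr0.
Qed.

Lemma Zv_unit : Zv \is a GRing.unit.
Proof. exact: Hdiv Zv_neq0. Qed.

Definition W := X bcol.
Definition mu (k : int) := v ^ (k + k).

Lemma mu_c k x : mu k * x = x * mu k.
Proof. exact: vz_c. Qed.

Lemma mu_unit k : mu k \is a GRing.unit.
Proof. exact: vz_unit. Qed.

Lemma mu_pow k (b : int) : mu k ^ b = mu (k * b).
Proof. by rewrite /mu exprz_exp mulrDl. Qed.

Lemma W_unit : W \is a GRing.unit.
Proof. exact: X_unit. Qed.

Lemma W_X c : W * X c = mu (dt i * c 0 ii) * X c * W.
Proof.
by rewrite /W X_comm (lam_skew HL) lam_bcol opprK mulrA.
Qed.

Lemma W_Zv : W * Zv = mu (- dt i) * Zv * W.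
Proof.
rewrite Zv_eq mulr_sumr [mu _ * _]mulr_sumr mulr_suml; apply: eq_bigr => r _.
rewrite mulrA -(h_c W (ltn_ord r)) -mulrA W_X mexp_ii mulrN1.
by rewrite !mulrA (h_c _ (ltn_ord r)).
Qed.

Lemma W_Y : W * X e = mu (dt i) * X e * W.
Proof. by rewrite W_X e_ii mulr1. Qed.

Definition Agen (y : D) := y = v \/ y = v^-1 \/ exists c : 'rV[int]_m, c 0 ii = 0 /\ y = X c.
Definition A := subring_gen Agen.

Lemma A_vz z : A (v ^ z).
Proof. by apply: vz_gen; [left | right; left]. Qed.

Lemma A_X (c : 'rV[int]_m) : c 0 ii = 0 -> A (X c).
Proof. by move=> Hc; apply: sg_base; right; right; exists c. Qed.

Lemma A_W y : A y -> W * y = y * W.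
Proof.
elim=> {y}.
- move=> y [->|[->|[c [Hc ->]]]].
  + by rewrite Hvc.
  + by apply/commrV; rewrite /GRing.comm Hvc.
  + by rewrite W_X Hc mulr0 /mu addr0 expr0z mul1r.
- by rewrite mulr1 mul1r.
- by move=> y _ IH; rewrite mulrN IH mulNr.
- by move=> y z _ IH1 _ IH2; rewrite mulrDr IH1 IH2 mulrDl.
- by move=> y z _ IH1 _ IH2; rewrite mulrA IH1 -mulrA IH2 mulrA.
Qed.

Lemma conj_mul (g x y : D) : g \is a GRing.unit -> g * (x * y) * g^-1 = (g * x * g^-1) * (g * y * g^-1).
Proof. by move=> ug; rewrite !mulrA divrK. Qed.

Lemma A_conj (b : int) a : A a -> A (Zv ^ b * a * Zv ^ (- b)).
Proof.
have ug : Zv ^ b \is a GRing.unit by apply: unitrXz; exact: Zv_unit.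
rewrite -invr_expz; elim=> {a}.
- move=> y [->|[->|[c [Hc ->]]]].
  + by rewrite -Hvc mulrK //; apply: sg_base; left.
  + have Hc : GRing.comm (Zv ^ b) v^-1 by apply: commrV; rewrite /GRing.comm Hvc.
    rewrite /GRing.comm in Hc; rewrite Hc.
    by rewrite mulrK //; apply: sg_base; right; left.
  + rewrite (qcl_pow b (vz_unit _) (vz_c _) Zv_unit (Z_qcomm Hc)) mulrK //.
    by rewrite exprz_exp; apply: sg_mul; [exact: A_vz| exact: A_X].
- by rewrite mulr1 mulrV //; exact: sg_one.
- by move=> y _ IH; rewrite mulrN mulNr; exact: sg_opp.
- by move=> y z _ IH1 _ IH2; rewrite mulrDr mulrDl; exact: sg_add.
- by move=> y z _ IH1 _ IH2; rewrite conj_mul //; exact: sg_mul.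
Qed.

Lemma evec_ii (j : 'I_m) : j != ii -> evec j 0 ii = 0.
Proof. by move=> nj; rewrite /evec mxE eqxx /= eq_sym (negbTE nj). Qed.

Lemma evecN_ii (j : 'I_m) : j != ii -> (- evec j) 0 ii = 0.
Proof. by move=> nj; rewrite mxE evec_ii // oppr0. Qed.

Lemma widen_neq (k : 'I_n) : k != i -> widen_ord Hnm k != ii.
Proof. by apply: contra => /eqP H; apply/eqP/val_inj; move: H => /(congr1 val). Qed.

Lemma frozen_neq (j : 'I_m) : (n <= j)%N -> j != ii.
Proof.
move=> Hj; apply/eqP => E; move: Hj; rewrite E /= leqNgt.
by rewrite ltn_ord.
Qed.

Definition NF x := exists s : seq (D * int),
  (forall p, p \in s -> A p.1) /\ x = \sum_(p <- s) p.1 * Zv ^ p.2.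

Lemma NF_single a b : A a -> NF (a * Zv ^ b).
Proof. by move=> Ha; exists [:: (a, b)]; split; [move=> p; rewrite inE => /eqP ->| rewrite big_seq1]. Qed.

Lemma NF_add x y : NF x -> NF y -> NF (x + y).
Proof.
move=> [s1 [H1 ->]] [s2 [H2 ->]]; exists (s1 ++ s2); split; last by rewrite big_cat.
by move=> p; rewrite mem_cat => /orP [/H1|/H2].
Qed.

Lemma NF_opp x : NF x -> NF (- x).
Proof.
move=> [s1 [H1 ->]]; exists [seq (- p.1, p.2) | p <- s1]; split.
  by move=> p /mapP [q Hq ->] /=; apply: sg_opp; apply: H1.
by rewrite big_map -sumrN; apply: eq_bigr => p _; rewrite mulNr.
Qed.

Lemma NF_mul x y : NF x -> NF y -> NF (x * y).
Proof.
move=> [s1 [H1 ->]] [s2 [H2 ->]].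
exists [seq (p.1 * (Zv ^ p.2 * q.1 * Zv ^ (- p.2)), p.2 + q.2) | p <- s1, q <- s2].
split.
  move=> r /allpairsP [[p q] [Hp Hq ->]] /=.
  by apply: sg_mul; [exact: H1| apply: A_conj; exact: H2].
rewrite big_allpairs_dep /= mulr_suml; apply: eq_bigr => p _.
rewrite mulr_sumr; apply: eq_bigr => q _.
rewrite (exprzDr Zv_unit) !mulrA; congr (_ * _).
rewrite -!mulrA; congr (_ * (_ * _)).
by rewrite -(exprzDr Zv_unit) addNr expr0z mulr1.
Qed.

Lemma NF_one : NF 1.
Proof. by rewrite -[1](mulr1 1) -[X in _ * X](expr0z Zv); apply: NF_single; apply: sg_one. Qed.

Lemma Lmut_NF x : Lring_mut v Hnm X h B d i x -> NF x.
Proof.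
rewrite /Lring_mut /ZP_adjoin; elim=> {x}.
- move=> y [[->|[->|[j [Hj [->|->]]]]]|[[k [nk [->|->]]]|[->|->]]].
  + by rewrite -[v]mulr1 -(expr0z Zv); apply: NF_single; apply: sg_base; left.
  + by rewrite -[v^-1]mulr1 -(expr0z Zv); apply: NF_single; apply: sg_base; right; left.
  + rewrite -[X _]mulr1 -(expr0z Zv); apply: NF_single; apply: A_X.
    by apply: evec_ii; apply: frozen_neq.
  + rewrite X_inv -[X _]mulr1 -(expr0z Zv); apply: NF_single; apply: A_X.
    by apply: evecN_ii; apply: frozen_neq.
  + rewrite -[X _]mulr1 -(expr0z Zv); apply: NF_single; apply: A_X.
    by apply: evec_ii; apply: widen_neq.
  + rewrite X_inv -[X _]mulr1 -(expr0z Zv); apply: NF_single; apply: A_X.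
    by apply: evecN_ii; apply: widen_neq.
  + by rewrite -[mut_var _ _ _ _ _ _]mul1r -[X in _ * X](expr1z); apply: NF_single; apply: sg_one.
  + by rewrite -[_^-1]mul1r -exprN1; apply: NF_single; apply: sg_one.
- exact: NF_one.
- by move=> y _; apply: NF_opp.
- by move=> y z _ H1 _ H2; apply: NF_add.
- by move=> y z _ H1 _ H2; apply: NF_mul.
Qed.

Lemma Zq_vz z : Zq v (v ^ z).
Proof. by apply: vz_gen; [left| right]. Qed.

Definition LS x := exists t : seq (D * 'rV[int]_m),
  (forall p, p \in t -> Zq v p.1) /\ x = \sum_(p <- t) p.1 * X p.2.

Lemma LS_single z c : Zq v z -> LS (z * X c).
Proof. by move=> Hz; exists [:: (z, c)]; split; [move=> p; rewrite inE => /eqP ->| rewrite big_seq1]. Qed.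

Lemma LS_add x y : LS x -> LS y -> LS (x + y).
Proof.
move=> [s1 [H1 ->]] [s2 [H2 ->]]; exists (s1 ++ s2); split; last by rewrite big_cat.
by move=> p; rewrite mem_cat => /orP [/H1|/H2].
Qed.

Lemma LS_opp x : LS x -> LS (- x).
Proof.
move=> [s1 [H1 ->]]; exists [seq (- p.1, p.2) | p <- s1]; split.
  by move=> p /mapP [q Hq ->] /=; apply: sg_opp; apply: H1.
by rewrite big_map -sumrN; apply: eq_bigr => p _; rewrite mulNr.
Qed.

Lemma LS_mul x y : LS x -> LS y -> LS (x * y).
Proof.
move=> [s1 [H1 ->]] [s2 [H2 ->]].
exists [seq (p.1 * q.1 * v ^ (lam L p.2 q.2), p.2 + q.2) | p <- s1, q <- s2].
split.
  move=> r /allpairsP [[p q] [Hp Hq ->]] /=.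
  by apply: sg_mul; [apply: sg_mul; [exact: H1| exact: H2]| exact: Zq_vz].
rewrite big_allpairs_dep /= mulr_suml; apply: eq_bigr => p _.
rewrite mulr_sumr; apply: eq_big_seq => q Hq.
rewrite -!mulrA; congr (_ * _).
have Hq1 : Zq v q.1 by apply: H2.
by rewrite mulrA -(Zq_c Hq1 (X p.2)) -mulrA HXm.
Qed.

Lemma Lring_LS x : Lring v Hnm X x -> LS x.
Proof.
rewrite /Lring /ZP_adjoin; elim=> {x}.
- move=> y [[->|[->|[j [Hj [->|->]]]]]|[k [->|->]]].
  + by rewrite -[v]mulr1 -X0; apply: LS_single; apply: sg_base; left.
  + by rewrite -[v^-1]mulr1 -X0; apply: LS_single; apply: sg_base; right.
  + by rewrite -[X _]mul1r; apply: LS_single; apply: sg_one.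
  + by rewrite X_inv -[X _]mul1r; apply: LS_single; apply: sg_one.
  + by rewrite -[X _]mul1r; apply: LS_single; apply: sg_one.
  + by rewrite X_inv -[X _]mul1r; apply: LS_single; apply: sg_one.
- by rewrite -[1]mulr1 -{2}X0; apply: LS_single; apply: sg_one.
- by move=> y _; apply: LS_opp.
- by move=> y z _ H1 _ H2; apply: LS_add.
- by move=> y z _ H1 _ H2; apply: LS_mul.
Qed.

Section Rings.
Variable Y : D -> Prop.
Let R := subring_gen (fun x => ZP_gens v n X x \/ Y x).

Lemma R_v : R v.
Proof. by apply: sg_base; left; left. Qed.

Lemma R_vV : R v^-1.
Proof. by apply: sg_base; left; right; left. Qed.

Lemma R_Zq z : Zq v z -> R z.
Proof. by apply: sg_mono => x [->|->]; [exact: R_v| exact: R_vV]. Qed.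

Lemma gens_j (j : 'I_m) : j != ii ->
  (forall k : 'I_n, k != i -> Y (X (evec (widen_ord Hnm k))) /\ Y ((X (evec (widen_ord Hnm k)))^-1)) ->
  R (X (evec j)) /\ R (X (evec j))^-1.
Proof.
move=> nj H; case: (ltnP j n) => Hj.
  pose k := Ordinal Hj.
  have Ek : widen_ord Hnm k = j by apply: val_inj.
  have nk : k != i by apply: contra nj => /eqP Eki; rewrite -Ek Eki.
  by rewrite -Ek; case: (H k nk) => H1 H2; split; apply: sg_base; right.
by split; apply: sg_base; left; right; right; exists j; split => //; [left|right].
Qed.

Lemma X_in (c : 'rV[int]_m) :
  (forall k : 'I_n, k != i -> Y (X (evec (widen_ord Hnm k))) /\ Y ((X (evec (widen_ord Hnm k)))^-1)) ->
  (c 0 ii = 0 \/ (0 <= c 0 ii /\ R (X e))) -> R (X c).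
Proof.
move=> H Hc; apply: X_gen; [by left; left| by left; right; left| move=> j].
case: (eqVneq j ii) => [->|nj].
  case: Hc => [->|[H1 H2]]; first by rewrite scale0r X0; apply: sg_one.
  exact: X_e_gen_pos.
by case: (gens_j nj H) => H1 H2; apply: X_e_gen.
Qed.

Lemma R_Zv :
  (forall k : 'I_n, k != i -> Y (X (evec (widen_ord Hnm k))) /\ Y ((X (evec (widen_ord Hnm k)))^-1)) ->
  R (X e) -> R (X e)^-1 -> R Zv.
Proof.
move=> H He He'; rewrite Zv_eq; apply: sg_sum => r _; apply: sg_mul.
  by apply: R_Zq; case: (Hh i) => Hz _; apply: Hz; exact: (ltn_ord r).
apply: X_gen; [by left; left| by left; right; left| move=> j].
case: (eqVneq j ii) => [->|nj]; first exact: X_e_gen.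
by case: (gens_j nj H) => H1 H2; apply: X_e_gen.
Qed.
End Rings.

Lemma Li_sub_L x : Lring_i v Hnm X h B d i x -> Lring v Hnm X x.
Proof.
have HY : forall k : 'I_n, k != i ->
    (exists k0 : 'I_n, X (evec (widen_ord Hnm k)) = X (evec (widen_ord Hnm k0)) \/
       X (evec (widen_ord Hnm k)) = (X (evec (widen_ord Hnm k0)))^-1) /\
    (exists k0 : 'I_n, (X (evec (widen_ord Hnm k)))^-1 = X (evec (widen_ord Hnm k0)) \/
       (X (evec (widen_ord Hnm k)))^-1 = (X (evec (widen_ord Hnm k0)))^-1).
  by move=> k _; split; exists k; [left|right].
rewrite /Lring_i /Lring /ZP_adjoin; apply: sg_mono => y [Hy|[[k [_ Hk]]|[->|->]]].
- by apply: sg_base; left.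
- by apply: sg_base; right; exists k.
- by apply: sg_base; right; exists i; left.
- by apply: R_Zv => //; apply: sg_base; right; exists i; [left|right].
Qed.

Lemma A_Li y : A y -> Lring_i v Hnm X h B d i y.
Proof.
rewrite /Lring_i /ZP_adjoin; apply: sg_mono => z [->|[->|[c [Hc ->]]]].
- exact: R_v.
- exact: R_vV.
- apply: X_in; last by left.
  by move=> k nk; split; left; exists k; split => //; [left|right].
Qed.

Lemma Zv_Li : Lring_i v Hnm X h B d i Zv.
Proof. by apply: sg_base; right; right; right. Qed.

Lemma Xe_Li : Lring_i v Hnm X h B d i (X e).
Proof. by apply: sg_base; right; right; left. Qed.

Lemma Li_sub_Lmut x : Lring_i v Hnm X h B d i x -> Lring_mut v Hnm X h B d i x.
Proof.
have HY : forall k : 'I_n, k != i ->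
   ((exists k0 : 'I_n, k0 != i /\ (X (evec (widen_ord Hnm k)) = X (evec (widen_ord Hnm k0)) \/
       X (evec (widen_ord Hnm k)) = (X (evec (widen_ord Hnm k0)))^-1)) \/
    X (evec (widen_ord Hnm k)) = Zv \/ X (evec (widen_ord Hnm k)) = Zv^-1) /\
   ((exists k0 : 'I_n, k0 != i /\ ((X (evec (widen_ord Hnm k)))^-1 = X (evec (widen_ord Hnm k0)) \/
       (X (evec (widen_ord Hnm k)))^-1 = (X (evec (widen_ord Hnm k0)))^-1)) \/
    (X (evec (widen_ord Hnm k)))^-1 = Zv \/ (X (evec (widen_ord Hnm k)))^-1 = Zv^-1).
  by move=> k nk; split; left; exists k; split => //; [left|right].
rewrite /Lring_i /Lring_mut /ZP_adjoin; apply: sg_mono => y [Hy|[[k [nk Hk]]|[->|->]]].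
- by apply: sg_base; left.
- by apply: sg_base; right; left; exists k.
- (* X e = Zv^-1 * (Zv * X e) *)
  rewrite -[X e](mulKr Zv_unit); apply: sg_mul; first by apply: sg_base; right; right; right.
  rewrite Zv_eq mulr_suml; apply: sg_sum => r _; rewrite -mulrA HXm mulrA.
  apply: sg_mul; first apply: sg_mul.
  + by apply: R_Zq; case: (Hh i) => Hz _; apply: Hz; exact: (ltn_ord r).
  + by apply: vz_gen; [left; left| left; right; left].
  + apply: X_in => //; left; rewrite mxE mexp_ii e_ii.
    by rewrite addNr.
- by apply: sg_base; right; right; left.
Qed.

Lemma hard x : Lring v Hnm X x -> Lring_mut v Hnm X h B d i x -> Lring_i v Hnm X h B d i x.
Proof.
move=> HLx /Lmut_NF [s [HsA Ex]].
set xm := \sum_(p <- s | p.2 < 0) p.1 * Zv ^ p.2.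
set xp := \sum_(p <- s | ~~ (p.2 < 0)) p.1 * Zv ^ p.2.
have Exx : x = xm + xp by rewrite Ex (bigID (fun p => p.2 < 0)).
have Hxp : Lring_i v Hnm X h B d i xp.
  rewrite /xp big_seq_cond; apply: sg_sum => p /andP [Hp Hb].
  apply: sg_mul; first exact: A_Li (HsA p Hp).
  by case: p Hp Hb => a [k|k] //= _ _; apply: sg_exp; exact: Zv_Li.
have HxmL : Lring v Hnm X xm.
  have -> : xm = x - xp by rewrite Exx addrK.
  by apply: sg_sub => //; apply: Li_sub_L.
have [t [Ht Ext]] := Lring_LS HxmL.
pose u := [seq (q.1 * X q.2, dt i * q.2 0 ii) | q <- t] ++
          [seq (- (p.1 * Zv ^ p.2), - dt i * p.2) | p <- [seq p <- s | p.2 < 0]].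
have Hu0 : \sum_(p <- u) p.1 = 0.
  rewrite big_cat !big_map /= -Ext big_filter sumrN.
  by rewrite subrr.
have Heig : forall p, p \in u -> W * p.1 = mu p.2 * p.1 * W.
  move=> p; rewrite mem_cat => /orP [/mapP [q Hq ->] | /mapP [q Hq ->]] /=.
  - rewrite mulrA -(Zq_c (Ht q Hq) W) -mulrA W_X !mulrA.
    by rewrite (Zq_c (Ht q Hq) (mu _)).
  - move: Hq; rewrite mem_filter => /andP [_ Hq].
    rewrite mulrN mulrA (A_W (HsA q Hq)) -(mulrA q.1 W).
    rewrite (qcr_pow q.2 (mu_unit _) (mu_c _) Zv_unit W_Zv) mu_pow.
    by rewrite !mulrN !mulNr !mulrA -(mu_c _ q.1).
have := hom_zero Hdiv W_unit mu_c mu_inj Heig Hu0 (fun k => k <= 0).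
rewrite big_cat /= !big_map /= [X in _ + X = _ -> _]big1_seq ?addr0; last first.
  move=> q /andP [Hle Hq]; move: Hq; rewrite mem_filter => /andP [Hq _].
  by exfalso; move: Hle; have := Hdt i; lia.
move=> Hneg.
have Exm : xm = \sum_(q <- t | ~~ (dt i * q.2 0 ii <= 0)) q.1 * X q.2.
  by rewrite Ext [LHS](bigID (fun q : D * 'rV[int]_m => dt i * q.2 0 ii <= 0)) /= Hneg add0r.
have Hxm : Lring_i v Hnm X h B d i xm.
  rewrite Exm big_seq_cond /Lring_i /ZP_adjoin; apply: sg_sum => q /andP [Hq Hc].
  apply: sg_mul; first exact: R_Zq (Ht q Hq).
  apply: X_in.
    by move=> k nk; split; left; exists k; split => //; [left|right].
  right; split; last exact: Xe_Li.
  by move: Hc; have := Hdt i; lia.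
by rewrite Exx; apply: sg_add.
Qed.
End Mut.

End Toric.

Theorem proposition4p2 (D : unitRingType) (v : D) (m n : nat)
    (Hn : (1 <= n)%N) (Hnm : (n <= m)%N)
    (L : 'M[int]_m) (B : 'M[int]_(m, n)) (d : 'I_n -> nat)
    (h : 'I_n -> nat -> D) (X : 'rV[int]_m -> D) :
  division_ring_with_q v ->
  compatible_pair L B ->
  valid_d B d ->
  valid_h v d h ->
  toric_frame v L X ->
  forall x : D,
    upper_bound v Hnm X h B d x <-> (forall i : 'I_n, Lring_i v Hnm X h B d i x).
Proof.
move=> [Hdiv [Hv Hvc]] [HL [dt [Hdt HLB]]] Hd Hh [HXm Hind] x; split.
- move=> [HLx HLm] i.
  exact: (hard Hdiv Hv Hvc HL HXm Hind Hdt HLB Hd Hh HLx (HLm i)).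
- move=> H; split.
  + exact: (Li_sub_L Hdiv Hv HL HXm Hind Hh (H (Ordinal Hn))).
  + move=> i; exact: (Li_sub_Lmut Hdiv Hv Hvc HL HXm Hind Hdt HLB Hd Hh (H i)).
Qed.
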